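(* The height function of a shrub is determined by its fraction: if $P$ and $P'$ are shrubs on the same finite set $I$ with $f_P=f_{P'}$, then $h_P=h_{P'}$.
   Context: A shrub $P$ on a finite set $I$ is a set $E$ of edges (unordered pairs of distinct elements of $I$) with a height function $h_P:I\to\mathbb{N}$; $j$ covers $i$ if $\{i,j\}\in E$ and $h_P(j)=h_P(i)+1$. Axioms: (1) edges join vertices whose heights differ by $1$; (2) every vertex of positive height covers some vertex; (3) no four distinct $a,b,c,d$ with $a$ covering $b$ and $c$, $c$ covering $d$, $\{b,d\}\notin E$; (4) no five distinct $a,b,c,d,e$ with $a$ covering $c,d$, $b$ covering $d,e$, $\{a,e\}\notin E$, $\{b,c\}\notin E$. A vertex is ramified if it covers at least two distinct vertices; two ramified vertices are equivalent if they cover the same set of vertices; $\operatorname{Ram}(P)$ is the set of equivalence classes, and for $r\in\operatorname{Ram}(P)$, $r^-$ is the common set of vertices covered by elements of $r$. For $S\subseteq I$, $\langle S\rangle_P$ is the set of $j\in I$ such that every descending path from $j$ (each vertex covering the next) to a vertex of height $0$ meets $S$. $P\setminus\langle r\rangle_P$ is the restriction of $P$ to $I\setminus\langle r\rangle_P$. With $u[S]=\sum_{k\in S}u_k$, $$f_P=\frac{1}{\prod_{i\in I}u[\langle\{i\}\rangle_P]}\prod_{r\in\operatorname{Ram}(P)}\frac{u[\langle r^-\rangle_{P\setminus\langle r\rangle_P}]}{u[\langle r^-\rangle_P]}\in\mathbb{Q}(u_i:i\in I).$$ *)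

(* Defs.v *)
From mathcomp Require Import all_boot all_algebra.
From mathcomp Require Import mpoly.
From mathcomp Require Import fraction.

Set Implicit Arguments.
Unset Strict Implicit.
Unset Printing Implicit Defensive.

Import GRing.Theory.
Local Open Scope ring_scope.

Section Shrub.
Variable I : finType.

(* A shrub on I: an edge relation E (edges = unordered pairs of distinct
   elements, encoded as a symmetric irreflexive relation) and a height h. *)
Variables (E : rel I) (h : I -> nat).

Definition covers (j i : I) : bool := E i j && (h j == (h i).+1)%N.

Definition is_shrub : Prop :=
  [/\ (forall i j, E i j = E j i) /\ (forall i, ~~ E i i),
   (forall i j, E i j -> (h j == (h i).+1)%N || (h i == (h j).+1)%N),
   (forall j, (0 < h j)%N -> exists i, covers j i),
   (forall a b c d, uniq [:: a; b; c; d] ->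
                covers a b -> covers a c -> covers c d -> E b d) &
   (forall a b c d e, uniq [:: a; b; c; d; e] ->
                covers a c -> covers a d -> covers b d -> covers b e ->
                E a e \/ E b c)].

Definition down (j : I) : {set I} := [set i | covers j i].

Definition ramified (j : I) : bool := (1 < #|down j|)%N.

Definition Ram : {set {set I}} :=
  [set [set k | ramified k & down k == down j] | j in [set j | ramified j]].

(* r^- : the common set of vertices covered by the elements of r *)
Definition rminus (r : {set I}) : {set I} := \bigcup_(j in r) down j.

(* <S> in the restriction of P to D: the j in D such that every descending
   path (each vertex covering the next) inside D from j to a vertex of height
   0 meets S.  Such a path from j has exactly h j steps, since each step
   lowers the height by one. *)
Definition closure_in (D S : {set I}) : {set I} :=
  [set j in D | [forall p : (h j).-tuple I,
     (path covers j p && all (mem D) p && (h (last j p) == 0)%N)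
       ==> has (mem S) (j :: p)]].

Definition closure (S : {set I}) : {set I} := closure_in setT S.

Definition ratfun := {fraction {mpoly rat[#|I|]}}.

Definition uvar (k : I) : ratfun := tofrac ('X_(enum_rank k) : {mpoly rat[#|I|]}).

Definition usum (S : {set I}) : ratfun := \sum_(k in S) uvar k.

Definition fP : ratfun :=
  (\prod_(i : I) (usum (closure [set i]))^-1) *
  \prod_(r in Ram) (usum (closure_in (~: closure r) (rminus r)) /
                    usum (closure (rminus r))).

End Shrub.

(* Main.v *)
Require Import Defs.
From mathcomp Require Import all_boot all_algebra.
From mathcomp Require Import mpoly.
From mathcomp Require Import fraction.
From mathcomp Require Import zify.

Set Implicit Arguments.
Unset Strict Implicit.
Unset Printing Implicit Defensive.

Section Comb.
Variables (I : finType) (E : rel I) (h : I -> nat).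

Local Notation cov := (covers E h).
Local Notation clin := (closure_in E h).
Local Notation cl := (closure_in E h setT).

Lemma cov_h x y : cov x y -> h x = (h y).+1.
Proof. by case/andP=> _ /eqP. Qed.

Lemma forall_tupleP n (P : seq I -> bool) :
  reflect (forall s, size s = n -> P s) [forall p : n.-tuple I, P p].
Proof.
apply: (iffP forallP) => H.
  by move=> s Hs; exact: (H (Tuple (introT eqP Hs))).
by move=> p; apply: H; exact: size_tuple.
Qed.


Lemma clinE D S x : x \in clin D S <-> x \in D /\
  (forall s, size s = h x -> path cov x s -> all (mem D) s ->
     h (last x s) = 0%N -> has (mem S) (x :: s)).
Proof.
rewrite inE; split.
  case/andP=> xD /(@forall_tupleP _ (fun s => (path cov x s && all (mem D) s
     && (h (last x s) == 0%N)) ==> has (mem S) (x :: s))) H.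
  split=> // s sz pth al lst.
  by have /implyP := H s sz; apply; rewrite pth al lst eqxx.
case=> xD H; rewrite xD /=.
apply/(@forall_tupleP _ (fun s => (path cov x s && all (mem D) s
     && (h (last x s) == 0%N)) ==> has (mem S) (x :: s))) => s sz.
by apply/implyP=> /andP[/andP[pth al] /eqP lst]; apply: H.
Qed.

Lemma clinP D S x : x \in clin D S <-> x \in D /\
  (x \in S \/ (0 < h x /\ forall y, cov x y -> y \in D -> y \in clin D S))%N.
Proof.
split.
  case/clinE=> xD H; split=> //.
  case xS: (x \in S); [by left | right].
  split.
    case hx: (h x) => [|n] //.
    have := H [::] (esym hx) isT isT hx.
    by rewrite /= xS.
  move=> y cxy yD; apply/clinE; split=> // s sz pth al lst.
  have := H (y :: s); rewrite /= xS /=; apply.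
  - by rewrite sz (cov_h cxy).
  - by rewrite cxy pth.
  - by rewrite yD al.
  - exact: lst.
case=> xD [xS | [hx Hy]]; apply/clinE; split=> // s sz pth al lst.
  by rewrite /= xS.
case: s sz pth al lst => [|y s] /= sz; first by rewrite -sz in hx.
case/andP=> cxy pth /andP[yD al] lst.
case/clinE: (Hy y cxy yD) => _ /(_ s) H.
have Hs : size s = h y by move: sz; rewrite (cov_h cxy) => -[].
by move: (H Hs pth al lst) => /= ->; rewrite orbT.
Qed.

Lemma clP S x : x \in cl S <->
  (x \in S \/ (0 < h x /\ forall y, cov x y -> y \in cl S))%N.
Proof.
split.
  case/clinP=> _ [-> | [hx H]]; [by left | right; split=> // y c].
  exact: H c (in_setT y).
case=> [xS | [hx H]]; apply/clinP; split; rewrite ?in_setT //; first by left.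
by right; split=> // y c _; apply: H.
Qed.


Section Shrub.
Hypothesis Hs : is_shrub E h.

Lemma Esym i j : E i j = E j i.
Proof. by case: Hs => [[H _] _ _ _ _]. Qed.

Lemma ax2 j : (0 < h j)%N -> exists i, cov j i.
Proof. by case: Hs => _ _ H _ _; apply: H. Qed.

Lemma ax3 a b c d : uniq [:: a; b; c; d] ->
  cov a b -> cov a c -> cov c d -> E b d.
Proof. by case: Hs => _ _ _ H _; apply: H. Qed.

Lemma cl_height S y : y \in cl S -> exists2 s, s \in S & (h s <= h y)%N.
Proof.
move: {2}(h y) (leqnn (h y)) => n; elim: n y => [|n IH] y hy.
  case/clP=> [yS|[hy' _]]; first by exists y.
  by move: hy hy'; rewrite leqn0 => /eqP ->.
case/clP=> [yS|[hy' H]]; first by exists y.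
have [z czy] := ax2 hy'.
have hz : (h z <= n)%N by move: hy; rewrite (cov_h czy).
have [s sS hs] := IH z hz (H z czy).
by exists s => //; rewrite (cov_h czy) (leq_trans hs).
Qed.

Lemma down_cov x y : (y \in down E h x) = cov x y.
Proof. by rewrite inE. Qed.

Lemma same_height a b : down E h a = down E h b -> down E h a != set0 -> h a = h b.
Proof.
move=> eqd /set0Pn[y] ya; move: (ya); rewrite eqd !down_cov => /cov_h ->.
by move: ya; rewrite down_cov => /cov_h ->.
Qed.

Lemma ram_gt0 x : ramified E h x -> (0 < h x)%N.
Proof.
rewrite /ramified => /ltnW; rewrite card_gt0 => /set0Pn[y].
by rewrite down_cov => /cov_h ->.
Qed.

Lemma RamP r : r \in Ram E h -> exists2 j, ramified E h j &
  r = [set k | ramified E h k & down E h k == down E h j].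
Proof. by case/imsetP=> j; rewrite inE => rj ->; exists j. Qed.

Lemma rminusE j : ramified E h j ->
  rminus E h [set k | ramified E h k & down E h k == down E h j] = down E h j.
Proof.
move=> rj; apply/setP=> y; apply/bigcupP/idP.
  by case=> v; rewrite inE => /andP[_ /eqP ->].
by move=> yd; exists j => //; rewrite inE rj eqxx.
Qed.

Lemma P1 r : r \in Ram E h -> forall x,
  (x \in cl r -> x \in cl (rminus E h r)) /\
  (x \in clin (~: cl r) (rminus E h r) <-> x \in cl (rminus E h r) /\ x \notin cl r).
Proof.
case/RamP=> j rj ->; rewrite rminusE //.
set rr := [set k | _ & _].

move=> x; move: {2}(h x) (leqnn (h x)) => n; elim: n x => [|n IH] x hx.
  have hx0 : h x = 0%N by apply/eqP; rewrite -leqn0.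
  split.
    case/clP=> [xrr|[]]; last by rewrite hx0.
    by move: xrr; rewrite inE => /andP[/ram_gt0]; rewrite hx0.
  split.
    case/clinP; rewrite inE => xB [xd|[]]; last by rewrite hx0.
    by split=> //; apply/clP; left.
  case=> /clP [xd|[]]; last by rewrite hx0.
  by move=> xB; apply/clinP; rewrite inE xB; split=> //; left.
have IH' y : cov x y -> (y \in cl rr -> y \in cl (down E h j)) /\
  (y \in clin (~: cl rr) (down E h j) <-> y \in cl (down E h j) /\ y \notin cl rr).
  by move=> c; apply: IH; move: hx; rewrite (cov_h c).
have part1 : x \in cl rr -> x \in cl (down E h j).
  case/clP=> [xrr|[hx' H]].
    move: (xrr); rewrite inE => /andP[rx /eqP dx].
    apply/clP; right; split; first exact: ram_gt0.
    by move=> y c; apply/clP; left; rewrite -dx down_cov.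
  by apply/clP; right; split=> // y c; apply: (IH' y c).1; apply: H.
split=> //; split.
  case/clinP; rewrite inE => xB [xd|[hx' H]].
    by split=> //; apply/clP; left.
  split=> //; apply/clP; right; split=> // y c.
  case yB: (y \in cl rr); first by apply: (IH' y c).1; rewrite yB.
  have yB' : y \in ~: cl rr by rewrite inE yB.
  by have /(IH' y c).2 [] := H y c yB'.
case=> /clP [xd|[hx' H]] xB; apply/clinP; rewrite inE xB; split=> //; first by left.
right; split=> // y c; rewrite inE => yB.
by apply/(IH' y c).2; split=> //; apply: H.
Qed.


Lemma allcl0 (X S : {set I}) : (forall x, x \in X -> h x = 0%N) ->
  [forall x in X, x \in cl S] = (X \subset S).
Proof.
move=> H; apply/forallP/subsetP.
  move=> Hf x xX; move/implyP: (Hf x) => /(_ xX) /clP [//|[]].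
  by rewrite H.
by move=> Hs' x; apply/implyP=> xX; apply/clP; left; apply: Hs'.
Qed.

Lemma allclS (X S Y : {set I}) : (forall x, x \in X -> 0 < h x /\ down E h x = Y)%N ->
  [forall x in X, x \in cl S] = (X \subset S) || [forall y in Y, y \in cl S].
Proof.
move=> H; apply/forallP/orP.
  move=> Hf; case XS: (X \subset S); [by left | right].
  case/subsetPn: (negbT XS) => x xX xS.
  move/implyP: (Hf x) => /(_ xX) /clP [xS'|[_ Hy]]; first by rewrite xS' in xS.
  apply/forallP=> y; apply/implyP; rewrite -(H x xX).2 down_cov; exact: Hy.
case=> [/subsetP XS|/forallP Hy] x; apply/implyP => xX; apply/clP.
  by left; apply: XS.
right; split; first exact: (H x xX).1.
move=> y c; move/implyP: (Hy y); apply; rewrite -(H x xX).2 down_cov //.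
Qed.

Lemma sum_sub1 (X : {set I}) : X != set0 ->
  (\sum_(i : I) (X \subset [set i]) = (#|X| == 1%N))%N.
Proof.
move=> X0; case: cards1P => [[x ->]|N1].
  rewrite (bigD1 x) //= sub1set in_set1 eqxx big1 // => i /negbTE.
  by rewrite sub1set in_set1 eq_sym => ->.
rewrite big1 // => i _; rewrite subset1 (negbTE X0) orbF.
by case: eqP => // XE; case: N1; exists i.
Qed.

Lemma sum_ram (X : {set I}) x0 : x0 \in X ->
  (forall x, x \in X -> down E h x = down E h x0) ->
  (\sum_(r in Ram E h) (X \subset r) = ramified E h x0)%N.
Proof.
move=> x0X Hd; case rx0: (ramified E h x0).
  set r0 := [set k | ramified E h k & down E h k == down E h x0].
  have r0R : r0 \in Ram E h by apply/imsetP; exists x0; rewrite ?inE.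
  rewrite (bigD1 r0) //= big1 ?addn0.
    have -> : X \subset r0 by apply/subsetP=> x xX; rewrite inE /ramified Hd // eqxx andbT.
    by [].
  move=> r /andP[/RamP[j rj ->] nr0]; case: (boolP (X \subset _)) => // /subsetP/(_ x0 x0X).
  rewrite inE => /andP[_ /eqP dj]; case/negP: nr0.
  by apply/eqP/setP=> k; rewrite !inE dj.
rewrite big1 // => r /RamP[j rj ->]; case: (boolP (X \subset _)) => // /subsetP/(_ x0 x0X).
by rewrite inE rx0.
Qed.

Definition cnt (X : {set I}) := (\sum_(i : I) [forall x in X, x \in cl [set i]] +
   \sum_(r in Ram E h) [forall x in X, x \in cl r])%N.

Lemma cnt_lemma m : forall X : {set I}, X != set0 -> (forall x, x \in X -> h x = m) ->
  (forall x y, x \in X -> y \in X -> down E h x = down E h y) ->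
  cnt X = (m + (#|X| == 1%N))%N.
Proof.
elim: m => [|m IH] X X0 Hh Hd; case/set0Pn: (X0) => x0 x0X.
  rewrite /cnt.
  rewrite (eq_bigr (fun i => nat_of_bool (X \subset [set i]))); last by move=> i _; rewrite allcl0.
  rewrite [Z in (_ + Z)%N](eq_bigr (fun r : {set I} => nat_of_bool (X \subset r))); last by move=> r _; rewrite allcl0.
  rewrite sum_sub1 // (sum_ram x0X) => [|x xX]; last exact: Hd.
  have -> : ramified E h x0 = false.
    by apply/negbTE/negP=> /ram_gt0; rewrite Hh.
  by rewrite addn0.
set Y := down E h x0.
have HX x : x \in X -> (0 < h x /\ down E h x = Y)%N.
  by move=> xX; rewrite Hh // (Hd x x0).
have [y0 c0] := ax2 (HX x0 x0X).1.
have y0Y : y0 \in Y by rewrite down_cov.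
have Y0 : Y != set0 by apply/set0Pn; exists y0.
have hY y : y \in Y -> h y = m.
  by rewrite down_cov => /cov_h; rewrite Hh // => -[].
have dY : forall y y', y \in Y -> y' \in Y -> down E h y = down E h y'.
  suff sub : forall y y', y \in Y -> y' \in Y -> down E h y \subset down E h y'.
    by move=> y y' yY y'Y; apply/eqP; rewrite eqEsubset !sub.
  move=> y y' yY y'Y; apply/subsetP=> d; rewrite !down_cov => cyd.
  case: (eqVneq y y') => [<- //|nyy'].
  have hd : h y = (h d).+1 by apply: cov_h.
  have hy := hY y yY; have hy' := hY y' y'Y.
  have hx0 := Hh x0 x0X.
  have ne u v : h u != h v -> u != v by move=> H; apply/eqP=> E0; rewrite E0 eqxx in H.
  have U : uniq [:: x0; y'; y; d].
    rewrite /= !inE !negb_or (eq_sym y') nyy' !ne //=; lia.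
  move: yY y'Y; rewrite !down_cov => c1 c2.
  have := ax3 U c2 c1 cyd; rewrite Esym /covers => ->; rewrite hy' -hy hd eqxx //.
rewrite /cnt.
rewrite (eq_bigr (fun i => (X \subset [set i]) + [forall y in Y, y \in cl [set i]])%N); last first.
  move=> i _; rewrite (allclS _ HX).
  case: (X \subset [set i]) / subsetP => [XS|] //=.
  case: (boolP [forall _ in _, _]) => // /forallP /(_ y0); rewrite y0Y /=.
  case/cl_height=> s; rewrite in_set1 => /eqP -> hs.
  move: (XS _ x0X); rewrite in_set1 => /eqP xi; rewrite -xi in hs.
  have := Hh x0 x0X; have := hY y0 y0Y; lia.
rewrite [Z in (_ + Z)%N](eq_bigr (fun r : {set I} => (X \subset r) + [forall y in Y, y \in cl r])%N); last first.
  move=> r rR; rewrite (allclS _ HX).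
  case: (X \subset r) / subsetP => [XS|] //=.
  case: (boolP [forall _ in _, _]) => // /forallP /(_ y0); rewrite y0Y /=.
  case/cl_height=> s sr hs.
  case/RamP: rR sr XS => j rj -> sr XS.
  have := XS _ x0X; rewrite !inE => /andP[_ /eqP dx0].
  move: sr; rewrite inE => /andP[rs /eqP ds].
  have : h s = h x0.
    apply: same_height; first by rewrite ds dx0.
    by rewrite -card_gt0 (ltnW rs).
  have := hY y0 y0Y; have := Hh x0 x0X; lia.
rewrite !big_split /= sum_sub1 // (sum_ram x0X) => [|x xX]; last by rewrite (HX x xX).2.
have := IH Y Y0 hY dY; rewrite /cnt => HY.
rewrite addnACA HY.
have : (0 < #|Y|)%N by rewrite card_gt0.
rewrite /ramified -/Y.
case: (#|Y|) => [|[|k]] //= _; lia.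
Qed.


Lemma forall1 k S : [forall x in [set k], x \in cl S] = (k \in cl S).
Proof.
apply/forallP/idP => [/(_ k)|kS x]; first by rewrite in_set1 eqxx.
by apply/implyP; rewrite in_set1 => /eqP ->.
Qed.

Lemma deg_id k :
  (\sum_(i : I) (k \in Defs.closure E h [set i]) +
   \sum_(r in Ram E h) (k \in Defs.closure E h (rminus E h r)) =
   (h k).+1 + \sum_(r in Ram E h)
       (k \in closure_in E h (~: Defs.closure E h r) (rminus E h r)))%N.
Proof.
rewrite /Defs.closure.
rewrite (eq_bigr (fun r : {set I} => (k \in cl r) + (k \in clin (~: cl r) (rminus E h r)))%N); last first.
  move=> r rR; have [H1 H2] := P1 rR k.
  case: (boolP (k \in clin (~: cl r) (rminus E h r))) => [kC|kC].
    by have [-> /negbTE ->] := proj1 H2 kC.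
  case: (boolP (k \in cl r)) => [/H1 -> //|kB].
  case: (boolP (k \in cl (rminus E h r))) => // kA.
  by case/negP: kC; apply: (proj2 H2).
rewrite big_split /= addnA.
have X0 : [set k] != set0 by apply/set0Pn; exists k; rewrite in_set1.
have Hh' : forall x, x \in [set k] -> h x = h k by move=> x; rewrite in_set1 => /eqP ->.
have Hd' : forall x y, x \in [set k] -> y \in [set k] -> down E h x = down E h y.
  by move=> x y; rewrite !in_set1 => /eqP -> /eqP ->.
have := cnt_lemma X0 Hh' Hd'; rewrite /cnt cards1 eqxx addn1 => H.
have e1 : (\sum_(i : I) [forall x in [set k], x \in cl [set i]] = \sum_(i : I) (k \in cl [set i]))%N.
  by apply: eq_bigr => i _; rewrite forall1.
have e2 : (\sum_(r in Ram E h) [forall x in [set k], x \in cl r] = \sum_(r in Ram E h) (k \in cl r))%N.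
  by apply: eq_bigr => i _; rewrite forall1.
by rewrite e1 e2 in H; rewrite H.
Qed.

Lemma ne1 i : Defs.closure E h [set i] != set0.
Proof. by apply/set0Pn; exists i; apply/clP; left; rewrite in_set1. Qed.

Lemma neA r : r \in Ram E h -> Defs.closure E h (rminus E h r) != set0.
Proof.
case/RamP=> j rj ->; rewrite rminusE //.
move: (rj); rewrite /ramified => /ltnW; rewrite card_gt0 => /set0Pn[y yd].
by apply/set0Pn; exists y; apply/clP; left.
Qed.

Lemma neC r : r \in Ram E h ->
  closure_in E h (~: Defs.closure E h r) (rminus E h r) != set0.
Proof.
case/RamP=> j rj ->; rewrite rminusE //.
move: (rj); rewrite /ramified => /ltnW; rewrite card_gt0 => /set0Pn[y yd].
apply/set0Pn; exists y; apply/clinP; split; last by left.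
rewrite inE; apply/negP => /cl_height [s]; rewrite inE => /andP[rs /eqP ds] hs.
move: yd; rewrite -ds down_cov => /cov_h hsy.
by rewrite hsy ltnn in hs.
Qed.

End Shrub.
End Comb.

Section Alg.
Import GRing.Theory Num.Theory.
Local Open Scope ring_scope.
Variable I : finType.

Definition msum (S : {set I}) : {mpoly rat[#|I|]} := \sum_(k in S) 'X_(enum_rank k).
Definition gk (k : I) (i : 'I_#|I|) : {poly rat} := if i == enum_rank k then 'X else 1.
Definition ev (k : I) (p : {mpoly rat[#|I|]}) : {poly rat} := mmap polyC (gk k) p.

Lemma evM k p q : ev k (p * q) = ev k p * ev k q.
Proof. by rewrite /ev rmorphM. Qed.

Lemma ev_prod k (J : finType) (P : pred J) (F : J -> {mpoly rat[#|I|]}) :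
  ev k (\prod_(j | P j) F j) = \prod_(j | P j) ev k (F j).
Proof. by rewrite /ev rmorph_prod. Qed.

Lemma ev_sum k (S : {set I}) (F : I -> {mpoly rat[#|I|]}) :
  ev k (\sum_(i in S) F i) = \sum_(i in S) ev k (F i).
Proof. by rewrite /ev raddf_sum. Qed.

Lemma evX k i : ev k 'X_(enum_rank i) = if i == k then 'X else 1.
Proof. by rewrite /ev mmapX mmap1U /gk (inj_eq enum_rank_inj). Qed.

Lemma ev_msum_size k S : S != set0 -> size (ev k (msum S)) = (k \in S).+1.
Proof.
move=> S0; rewrite /msum ev_sum.
under eq_bigr do rewrite evX.
case kS: (k \in S).
  rewrite (bigD1 k) //= eqxx.
  rewrite (eq_bigr (fun _ => (1:rat)%:P)) => [|i /andP[_ /negbTE ->] //].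
  by rewrite -rmorph_sum size_XaddC.
rewrite (eq_bigr (fun _ => (1:rat)%:P)) => [|i iS]; last first.
  by case: eqP => // ik; rewrite ik kS in iS.
rewrite -rmorph_sum size_polyC sumr_const pnatr_eq0 -lt0n card_gt0 S0.
by [].
Qed.

Lemma size_prod_ev k (J : finType) (P : pred J) (S : J -> {set I}) :
  (forall j, P j -> S j != set0) ->
  size (\prod_(j | P j) ev k (msum (S j))) = (\sum_(j | P j) (k \in S j)).+1%N.
Proof.
move=> H; rewrite size_prod => [|j Pj]; last by rewrite -size_poly_gt0 ev_msum_size // H.
rewrite (eq_bigr (fun j => (k \in S j) + 1)%N) => [|j Pj]; last by rewrite ev_msum_size // ?addn1 // H.
rewrite big_split /=.
have -> : (\sum_(j | P j) 1 = #|P|)%N by rewrite -sum1_card.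
by rewrite -addSn addnK.
Qed.

Lemma cross (F : fieldType) (a b c d : F) :
  b != 0 -> d != 0 -> a / b = c / d -> a * d = c * b.
Proof.
move=> b0 d0 H; have := congr1 (fun t => t * b * d) H.
by rewrite /= divfK // -mulrA (mulrC b) mulrA divfK.
Qed.

Lemma usumE S : usum S = tofrac (msum S).
Proof. by rewrite /usum /uvar /msum rmorph_sum. Qed.

Definition Nf (E : rel I) (h : I -> nat) : {mpoly rat[#|I|]} :=
  \prod_(r in Ram E h) msum (closure_in E h (~: Defs.closure E h r) (rminus E h r)).
Definition Df (E : rel I) (h : I -> nat) : {mpoly rat[#|I|]} :=
  (\prod_(i : I) msum (Defs.closure E h [set i])) *
  \prod_(r in Ram E h) msum (Defs.closure E h (rminus E h r)).

Lemma fPE E h : fP E h = tofrac (Nf E h) / tofrac (Df E h).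
Proof.
rewrite /fP /Nf /Df.
under eq_bigr do rewrite usumE.
under [X in _ * X]eq_bigr do rewrite !usumE.
rewrite rmorphM !rmorph_prod.
by rewrite prodfV big_split /= prodfV invfM mulrCA.
Qed.

End Alg.

Import GRing.Theory.

Theorem mainTheorem14 (I : finType) (E : rel I) (h : I -> nat)
    (E' : rel I) (h' : I -> nat) :
  is_shrub E h -> is_shrub E' h' -> fP E h = fP E' h' -> h =1 h'.
Proof.
move=> HP HP' Heq k.
have sD : forall (E0 : rel I) (h0 : I -> nat), is_shrub E0 h0 ->
    size (ev k (Df E0 h0)) = (\sum_(i : I) (k \in Defs.closure E0 h0 [set i]) +
      \sum_(r in Ram E0 h0) (k \in Defs.closure E0 h0 (rminus E0 h0 r))).+1%N.
  move=> E0 h0 H0; rewrite /Df evM !ev_prod size_mul.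
  - rewrite size_prod_ev => [|i _]; last exact: ne1.
    rewrite size_prod_ev => [|r rR]; last exact: neA.
    by rewrite addSn addnS.
  - rewrite -size_poly_gt0 size_prod_ev // => i _; exact: ne1.
  - rewrite -size_poly_gt0 size_prod_ev // => r rR; exact: neA.
have sN : forall (E0 : rel I) (h0 : I -> nat), is_shrub E0 h0 ->
    size (ev k (Nf E0 h0)) = (\sum_(r in Ram E0 h0)
       (k \in closure_in E0 h0 (~: Defs.closure E0 h0 r) (rminus E0 h0 r))).+1%N.
  move=> E0 h0 H0; rewrite /Nf ev_prod.
  by rewrite size_prod_ev => // r rR; exact: neC.
have nzD : forall (E0 : rel I) (h0 : I -> nat), is_shrub E0 h0 -> (Df E0 h0 != 0)%R.
  move=> E0 h0 H0; apply/eqP=> D0.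
  by have := sD E0 h0 H0; rewrite D0 /ev raddf0 size_poly0.
have nzN : forall (E0 : rel I) (h0 : I -> nat), is_shrub E0 h0 -> (ev k (Nf E0 h0) != 0)%R.
  by move=> E0 h0 H0; rewrite -size_poly_gt0 sN.
have nzDe : forall (E0 : rel I) (h0 : I -> nat), is_shrub E0 h0 -> (ev k (Df E0 h0) != 0)%R.
  by move=> E0 h0 H0; rewrite -size_poly_gt0 sD.
have eqND : (Nf E h * Df E' h' = Nf E' h' * Df E h)%R.
  move: Heq; rewrite !fPE => Heq.
  have dz : (tofrac (Df E h) != 0)%R by rewrite tofrac_eq0 nzD.
  have dz' : (tofrac (Df E' h') != 0)%R by rewrite tofrac_eq0 nzD.
  have := cross dz dz' Heq; rewrite -!rmorphM => /eqP; rewrite tofrac_eq.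
  by move/eqP.
have := congr1 (fun p => size (ev k p)) eqND; rewrite /= !(evM k (Nf _ _)).
have n1 := nzN _ _ HP; have n2 := nzN _ _ HP'.
have n3 := nzDe _ _ HP; have n4 := nzDe _ _ HP'.
rewrite !size_mul // (sN _ _ HP) (sN _ _ HP') (sD _ _ HP) (sD _ _ HP').
have := deg_id HP k; have := deg_id HP' k.
move=> H1 H2 H3; lia.

Qed.
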